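(* Let $n\ge 1$ and let $I=(i_1,\ldots,i_r)$ be a composition of $n$. Then $$\sum_{\sigma\in\mathfrak S_n,\ \mathrm{SC}(\sigma)=I} q^{\binom{n}{2}-\mathrm{inv}(\sigma)} \;=\; q^{\mathrm{maj}(I)}\,\frac{[n]_q!}{[i_1]_q\,[i_1+i_2]_q\cdots[i_1+i_2+\cdots+i_r]_q},$$ where $\mathrm{maj}(I)=\sum_{j=1}^{r-1}(i_1+\cdots+i_j)$. (The right-hand side is the polynomial $c_I(q)$.)
   Context: Permutations $\sigma\in\mathfrak S_n$ are viewed as words $\sigma_1\sigma_2\cdots\sigma_n$. A word $a_1a_2\cdots a_m$ of integers is initially dominated if $a_1>a_j$ for all $2\le j\le m$. Every permutation has a unique factorization $\sigma=u_1u_2\cdots u_r$ into initially dominated words whose first (maximal) letters are increasing; the saillance composition of $\sigma$ is $\mathrm{SC}(\sigma)=(|u_1|,\ldots,|u_r|)$. $\mathrm{inv}(\sigma)$ is the number of inversions of $\sigma$, $[m]_q=1+q+\cdots+q^{m-1}$ and $[n]_q!=[1]_q[2]_q\cdots[n]_q$. *)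

(* Defs.v *)
From mathcomp Require Import all_boot all_order all_algebra all_fingroup.
Set Implicit Arguments. Unset Strict Implicit. Unset Printing Implicit Defensive.
Import GRing.Theory.
Local Open Scope ring_scope.

Definition perm_word n (s : 'S_n) : seq nat := [seq (val (s i)) | i <- enum 'I_n].

Definition is_composition (n : nat) (I : seq nat) : bool :=
  all (fun k => 0 < k)%N I && (sumn I == n).

Definition init_dominated (w : seq nat) : bool :=
  if w is a :: t then all (fun b => b < a)%N t else false.

Definition saillance_factorization (w : seq nat) (I : seq nat) : bool :=
  let us := reshape I w in
  [&& all (fun k => 0 < k)%N I, sumn I == size w, all init_dominated us
    & sorted ltn [seq head 0%N u | u <- us]].

(* SC(s) = I  (the factorization is unique, so this is equality with SC) *)
Definition SC_is n (s : 'S_n) (I : seq nat) : bool :=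
  saillance_factorization (perm_word s) I.

Definition inv_perm n (s : 'S_n) : nat :=
  #|[set p : 'I_n * 'I_n | (p.1 < p.2)%N && (s p.2 < s p.1)%N]|.

Definition qint (m : nat) : {poly rat} := \sum_(i < m) 'X^i.
Definition qfact (n : nat) : {poly rat} := \prod_(1 <= m < n.+1) qint m.

Definition partial_sums (I : seq nat) : seq nat :=
  [seq sumn (take k I) | k <- iota 1 (size I)].

Definition majI (I : seq nat) : nat := sumn (belast 0%N (partial_sums I)).

Definition cI (n : nat) (I : seq nat) : {poly rat} :=
  ('X^(majI I) * qfact n) %/ \prod_(k <- partial_sums I) qint k.

(* Main.v *)
Require Import Defs.
From mathcomp Require Import all_boot all_order all_algebra all_fingroup.
From mathcomp Require Import zify ring.
Import GRing.Theory.
Local Open Scope ring_scope.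

Definition heads (us : seq (seq nat)) := [seq head 0%N u | u <- us].

Lemma path_last_max (s : seq nat) y :
  path ltn y s -> all (fun x => x <= last y s)%N (y :: s).
Proof.
elim: s y => [|z s IH] y /=; first by rewrite leqnn.
move=> /andP [yz pz]; have := IH z pz => /= /andP [h1 h2].
by rewrite h1 h2 andbT; lia.
Qed.

Lemma sorted_last_max (s : seq nat) x :
  sorted ltn s -> x \in s -> (x <= last 0 s)%N.
Proof.
case: s => // y s /= H xin.
by move/allP: (path_last_max _ _ H) => /(_ x xin).
Qed.

Lemma sf_M1 w J : saillance_factorization w J ->
  all (fun z => z <= last 0 (heads (reshape J w)))%N w.
Proof.
case/and4P => _ /eqP hs hd hsort.
apply/allP => z zin.
have : z \in flatten (reshape J w) by rewrite reshapeKr // hs.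
case/flattenP => u uin zu.
have hu : (z <= head 0 u)%N.
  move/allP: hd => /(_ u uin); case: u uin zu => // h t _ /=.
  rewrite inE => /orP [/eqP -> //| zt] /allP /(_ z zt). lia.
apply: leq_trans hu _; apply: sorted_last_max => //.
by apply: map_f.
Qed.

Lemma sf_M2 w J : J != [::] -> saillance_factorization w J ->
  last 0 (heads (reshape J w)) \in w.
Proof.
case/lastP: J => // J k _.
case/and4P => _ /eqP hs hd hsort.
rewrite sumn_rcons in hs.
rewrite reshape_rcons // /heads map_rcons last_rcons.
move: hd; rewrite reshape_rcons // all_rcons => /andP [].
case E: (drop (sumn J) w) => [|h t] // _ _ /=.
by rewrite -(cat_take_drop (sumn J) w) mem_cat E mem_head orbT.
Qed.

Lemma sorted_rcons_ltn (s : seq nat) y : s != [::] ->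
  sorted ltn (rcons s y) = sorted ltn s && (last 0 s < y)%N.
Proof. by case: s => // x s _ /=; rewrite rcons_path. Qed.

Lemma all_lt_last w J y : J != [::] -> saillance_factorization w J ->
  all (fun z => z < y)%N w = (last 0 (heads (reshape J w)) < y)%N.
Proof.
move=> nJ H; apply/idP/idP.
  by move/allP => /(_ _ (sf_M2 _ _ nJ H)).
move=> lt; apply/allP => z /(allP (sf_M1 _ _ H)) => le; lia.
Qed.

Lemma sf_rcons1 w y I : sumn I = size w ->
  saillance_factorization (rcons w y) (rcons I 1%N) =
  all (fun z => z < y)%N w && saillance_factorization w I.
Proof.
move=> hs.
case: (I =P [::]) => [EI|/eqP nI].
  subst I; case: w hs => // _; by [].
have Et: take (sumn I) (rcons w y) = w by rewrite hs -cats1 take_size_cat.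
have Ed: drop (sumn I) (rcons w y) = [:: y] by rewrite hs -cats1 drop_size_cat.
rewrite /saillance_factorization reshape_rcons; last by rewrite size_rcons hs addn1.
rewrite Et Ed all_rcons sumn_rcons size_rcons hs addn1 eqxx /= map_rcons.
rewrite all_rcons /= eqxx /=.
have nR : [seq head 0%N u | u <- reshape I w] != [::].
  by case: I nI {Et Ed hs} => // a I _; case: (reshape _ _).
rewrite sorted_rcons_ltn //.
case H1: (all _ I) => /=; last by rewrite andbF. case H2: (all init_dominated _) => /=; last by rewrite andbF.
case H3: (sorted _ _) => /=; last by rewrite andbF.
rewrite andbT (@all_lt_last w I y) //.
by rewrite /saillance_factorization H1 H2 H3 hs eqxx.
Qed.

Lemma sf_rconsS (w : seq nat) (y : nat) (I : seq nat) k : y \notin w -> (0 < k)%N -> (sumn I + k = size w)%N ->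
  saillance_factorization (rcons w y) (rcons I k.+1) =
  ~~ all (fun z => z < y)%N w && saillance_factorization w (rcons I k).
Proof.
move=> yw k0 hs.
have Et: take (sumn I) (rcons w y) = take (sumn I) w.
  by rewrite -cats1 takel_cat //; lia.
have Ed: drop (sumn I) (rcons w y) = rcons (drop (sumn I) w) y.
  by rewrite drop_rcons //; lia.
have hsz : size (drop (sumn I) w) = k by rewrite size_drop; lia.
rewrite /saillance_factorization.
rewrite [reshape (rcons I k.+1) _]reshape_rcons; last by rewrite size_rcons -hs addnS.
rewrite [reshape (rcons I k) _]reshape_rcons //.
rewrite Et Ed !all_rcons !sumn_rcons size_rcons !map_rcons.
case E: (drop (sumn I) w) hsz => [|h t] /= hk; first by rewrite -hk in k0.
have -> : (sumn I + k.+1 == (size w).+1)%N = (sumn I + k == size w)%N by rewrite -hs; lia.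
rewrite all_rcons k0 hs eqxx /=.
case H1: (all _ I) => /=; last by rewrite !andbF.
case H2: (all init_dominated _); last by rewrite !andbF.
case H3: (all _ t); last by rewrite !andbF.
case H4: (sorted _ _); last by rewrite !andbF.
rewrite !andbT.
have hsf : saillance_factorization w (rcons I k).
  rewrite /saillance_factorization reshape_rcons // all_rcons !sumn_rcons E /=.
  by rewrite !all_rcons map_rcons /= H1 H2 H3 H4 k0 hs eqxx.
have nJ : rcons I k != [::] by case: (I).
have hl : last 0 (heads (reshape (rcons I k) w)) = h.
  by rewrite reshape_rcons // E /heads map_rcons last_rcons.
apply/idP/idP.
  move=> yh; apply/negP => /allP /(_ h).
  have : h \in w by rewrite -hl; apply: sf_M2.
  by move=> hw /(_ hw); lia.
case/allPn => z zw; have := allP (sf_M1 _ _ hsf) z zw; rewrite hl.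
have : z != y by apply/eqP => ezy; rewrite -ezy zw in yw.
lia.
Qed.

Lemma sf_map (f : nat -> nat) (w : seq nat) I : {mono f : a b / (a < b)%N} ->
  saillance_factorization (map f w) I = saillance_factorization w I.
Proof.
move=> mf; rewrite /saillance_factorization size_map -map_reshape all_map.
have -> : all (preim (map f) init_dominated) (reshape I w) =
          all init_dominated (reshape I w).
  apply: eq_all => u; case: u => //= a t; rewrite all_map.
  by apply: eq_all => b /=; rewrite mf.
case H: (all init_dominated _); last by rewrite !andbF.
rewrite -map_comp.
have -> : [seq (head 0%N \o map f) u | u <- reshape I w] =
          map f [seq head 0%N u | u <- reshape I w].
  rewrite -map_comp; apply/eq_in_map => u uin.
  by move/allP: H => /(_ u uin); case: u {uin}.
congr [&& _, _, _ & _].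
case: [seq head 0%N u | u <- reshape I w] => //= x s.
rewrite (@path_map _ _ f ltn x s).
by apply: eq_path => a b /=; rewrite mf.
Qed.

Local Close Scope ring_scope.

Lemma bump_mono (a : nat) : {mono bump a : x y / x < y}.
Proof. move=> x y; rewrite /bump; case: (leqP a x); case: (leqP a y) => /= ? ?; lia. Qed.

Lemma pw_lift n (a : 'I_n.+1) (s : 'S_n) :
  perm_word (lift_perm ord_max a s) = rcons (map (bump a) (perm_word s)) a.
Proof.
rewrite /perm_word enum_ordSr map_rcons lift_perm_id; congr rcons.
rewrite -!map_comp; apply: eq_map => i /=.
have -> : widen_ord (leqnSn n) i = lift ord_max i by apply: val_inj => /=; rewrite /bump leqNgt ltn_ord.
by rewrite lift_perm_lift.
Qed.

Lemma size_pw n (s : 'S_n) : size (perm_word s) = n.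
Proof. by rewrite /perm_word size_map size_enum_ord. Qed.

Lemma mem_pw n (s : 'S_n) (x : nat) : x < n -> x \in perm_word s.
Proof.
move=> xn; pose i0 := (s^-1)%g (Ordinal xn).
have -> : x = val (s i0) by rewrite /i0 permKV.
by apply: (map_f (fun i => val (s i))); rewrite mem_enum.
Qed.

Lemma all_lt_pw n (a : 'I_n.+1) (s : 'S_n) :
  all (fun z => z < a) (map (bump a) (perm_word s)) = (val a == n).
Proof.
have := ltn_ord a; rewrite ltnS leq_eqVlt => /orP [/eqP ha|ha].
  have -> : (val a == n) = true by apply/eqP.
  apply/allP => z /mapP [x /mapP [i _ ->] ->].
  rewrite /bump; have := ltn_ord (s i); move: ha; case: leqP => /=; lia.
have -> : (val a == n) = false by apply/eqP => e; move: ha; rewrite /= e ltnn.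
apply/negP => /allP /(_ (bump a a)).
rewrite map_f ?mem_pw // => /(_ isT); rewrite /bump leqnn /=; lia.
Qed.

Lemma notin_pw n (a : 'I_n.+1) (s : 'S_n) : val a \notin map (bump a) (perm_word s).
Proof. by apply/mapP => [[x _ /eqP]]; rewrite (negbTE (neq_bump _ _)). Qed.

Lemma inv_sum n (s : 'S_n) :
  inv_perm s = \sum_(i < n) \sum_(j < n) ((i < j) && (s j < s i)).
Proof.
rewrite /inv_perm -sum1_card big_mkcond /= pair_bigA /=.
by apply: eq_bigr => -[i j] _; rewrite inE /=; case: ifP.
Qed.

Lemma widen_lift n (i : 'I_n) : widen_ord (leqnSn n) i = lift ord_max i.
Proof. by apply: val_inj => /=; rewrite /bump leqNgt ltn_ord. Qed.

Lemma sum_geq n a : \sum_(k < n) (a <= k) = n - a.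
Proof.
elim: n => [|n IH]; first by rewrite big_ord0.
rewrite big_ord_recr /= IH; case: leqP => /=; lia.
Qed.

Lemma inv_lift n (a : 'I_n.+1) (s : 'S_n) :
  inv_perm (lift_perm ord_max a s) = inv_perm s + (n - a).
Proof.
rewrite !inv_sum big_ord_recr /=.
rewrite [X in _ + X]big1 ?addn0; last first.
  by move=> j _; rewrite ltnNge -ltnS ltn_ord.
under eq_bigr => i _ do rewrite big_ord_recr /=.
rewrite big_split /=; congr (_ + _).
  apply: eq_bigr => i _; apply: eq_bigr => j _.
  by rewrite !widen_lift !lift_perm_lift /= bump_mono.
rewrite -(sum_geq n a) [RHS](reindex_inj (@perm_inj _ s)).
apply: eq_bigr => i _; rewrite ltn_ord /= widen_lift lift_perm_lift lift_perm_id /=.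
case: (leqP a (s i)) => h.
  by rewrite /bump h add1n ltnS h.
by rewrite /bump (leqNgt a (s i)) h /= add0n ltnNge ltnW.
Qed.

Local Open Scope ring_scope.

Lemma sum_lift n (P : pred 'S_n.+1) (F : 'S_n.+1 -> {poly rat}) :
  \sum_(s : 'S_n.+1 | P s) F s =
  \sum_(a : 'I_n.+1) \sum_(s : 'S_n | P (lift_perm ord_max a s)) F (lift_perm ord_max a s).
Proof.
pose h := fun p : 'I_n.+1 * 'S_n => lift_perm ord_max p.1 p.2.
have hinj : injective h.
  move=> [a1 s1] [a2 s2] /= E.
  have ea : a1 = a2.
    by have := congr1 (fun t : 'S_n.+1 => t ord_max) E; rewrite /h /= !lift_perm_id.
  subst; congr pair; apply/permP => i; apply: (@lift_inj _ a2).
  by rewrite -!(@lift_perm_lift _ ord_max) /h /= in E *; rewrite E.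
have hbij : bijective h.
  by apply: inj_card_bij => //; rewrite card_prod card_ord !card_Sn factS.
rewrite (reindex h) /=; last by apply: onW_bij.
by rewrite pair_big_dep /=.
Qed.

Local Close Scope ring_scope.

Lemma sum_gap n : \sum_(i < n) (n - i.+1) = 'C(n, 2).
Proof.
elim: n => [|n IH]; first by rewrite big_ord0.
rewrite big_ord_recl /= binS bin1 -IH subn1 /= addnC; congr (_ + _).
Qed.

Lemma inv_bound n (s : 'S_n) : inv_perm s <= 'C(n, 2).
Proof.
rewrite inv_sum -sum_gap; apply: leq_sum => i _.
rewrite -sum_geq; apply: leq_sum => j _.
by case: (i < j) => /=; [exact: leq_b1|].
Qed.

Lemma exp_lift n (a : 'I_n.+1) (s : 'S_n) :
  'C(n.+1, 2) - inv_perm (lift_perm ord_max a s) = ('C(n, 2) - inv_perm s) + a.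
Proof.
rewrite inv_lift binS bin1; have := inv_bound _ s; have := ltn_ord a; lia.
Qed.

Lemma SC_lift1 n (a : 'I_n.+1) (s : 'S_n) I : sumn I = n ->
  SC_is (lift_perm ord_max a s) (rcons I 1) = (val a == n) && SC_is s I.
Proof.
move=> hs; rewrite /SC_is pw_lift sf_rcons1; last by rewrite size_map size_pw.
by rewrite all_lt_pw sf_map //; exact: bump_mono.
Qed.

Lemma SC_liftS n (a : 'I_n.+1) (s : 'S_n) I k : 0 < k -> sumn I + k = n ->
  SC_is (lift_perm ord_max a s) (rcons I k.+1) = (val a != n) && SC_is s (rcons I k).
Proof.
move=> k0 hs; rewrite /SC_is pw_lift sf_rconsS ?notin_pw //; last by rewrite size_map size_pw.
by rewrite all_lt_pw sf_map //; exact: bump_mono.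
Qed.

Local Open Scope ring_scope.

Definition Sg n I : {poly rat} :=
  \sum_(s : 'S_n | SC_is s I) 'X^('C(n, 2) - inv_perm s).

Lemma Sg_rec1 n I : sumn I = n -> Sg n.+1 (rcons I 1%N) = 'X^n * Sg n I.
Proof.
move=> hs; rewrite /Sg sum_lift big_ord_recr /=.
rewrite big1 ?add0r; last first.
  move=> i _; apply: big_pred0 => s.
  by rewrite SC_lift1 //= (ltn_eqF (ltn_ord i)).
under eq_bigl => s do rewrite SC_lift1 // eqxx /=.
rewrite mulr_sumr; apply: eq_bigr => s _.
by rewrite exp_lift exprD mulrC.
Qed.

Lemma Sg_recS n I k : (0 < k)%N -> (sumn I + k = n)%N ->
  Sg n.+1 (rcons I k.+1) = qint n * Sg n (rcons I k).
Proof.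
move=> k0 hs; rewrite /Sg sum_lift big_ord_recr /=.
rewrite [X in _ + X]big_pred0 ?addr0; last by move=> s; rewrite SC_liftS //= eqxx.
rewrite /qint mulr_suml; apply: eq_bigr => i _.
under eq_bigl => s do rewrite SC_liftS //= (ltn_eqF (ltn_ord i)) /=.
rewrite mulr_sumr; apply: eq_bigr => s _.
by rewrite exp_lift exprD mulrC.
Qed.

Lemma ps_rcons I x : partial_sums (rcons I x) = rcons (partial_sums I) (sumn I + x)%N.
Proof.
rewrite /partial_sums size_rcons -(addn1 (size I)) iotaD map_cat cats1 /=.
congr rcons.
  apply/eq_in_map => k; rewrite mem_iota => /andP [_ hk].
  by rewrite -cats1 takel_cat //; move: hk; rewrite add1n ltnS.
by rewrite take_oversize ?sumn_rcons // size_rcons add1n.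
Qed.

Lemma majI_rcons I x : majI (rcons I x) = sumn (partial_sums I).
Proof. by rewrite /majI ps_rcons belast_rcons. Qed.

Lemma sumn_ps I : sumn (partial_sums I) = (majI I + sumn I)%N.
Proof.
case/lastP: I => [|I x] //.
by rewrite ps_rcons majI_rcons !sumn_rcons.
Qed.

Lemma qfactS n : qfact n.+1 = qfact n * qint n.+1.
Proof. by rewrite /qfact big_nat_recr. Qed.

Lemma prod_ps_rcons I x :
  \prod_(k <- partial_sums (rcons I x)) qint k =
  (\prod_(k <- partial_sums I) qint k) * qint (sumn I + x).
Proof. by rewrite ps_rcons -cats1 big_cat big_seq1. Qed.

Lemma Sg0 : Sg 0 [::] = 1.
Proof.
rewrite /Sg (eq_bigl (fun _ => true)); last first.
  move=> s; rewrite /SC_is.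
  have : size (perm_word s) = 0%N by rewrite size_pw.
  by case: (perm_word s).
rewrite /= sumr_const card_Sn /=.
by [].
Qed.

Lemma main_eq n I : is_composition n I ->
  Sg n I * \prod_(k <- partial_sums I) qint k = 'X^(majI I) * qfact n.
Proof.
elim: n I => [|n IH] I.
  case: I => [|x I]; last by rewrite /is_composition /= => /andP [/andP [x0 _] /eqP]; lia.
  move=> _; rewrite Sg0 big_nil /majI /= /qfact big_geq //.
case/lastP: I => [|I x]; first by rewrite /is_composition /=.
rewrite /is_composition all_rcons sumn_rcons => /andP [/andP [x0 hp] /eqP hs].
case: x x0 hs => [|[|k]] // _ hs.
  have hsI : sumn I = n by lia.
  rewrite Sg_rec1 // prod_ps_rcons majI_rcons sumn_ps hsI exprD qfactS.
  have := IH I; rewrite /is_composition hp hsI eqxx => /(_ isT) H.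
  transitivity ('X^n * (Sg n I * (\prod_(k <- partial_sums I) qint k)) * qint (n + 1)%N).
    by ring.
  by rewrite H addn1; ring.
have hsI : (sumn I + k.+1 = n)%N by lia.
rewrite Sg_recS // prod_ps_rcons majI_rcons qfactS.
have := IH (rcons I k.+1).
rewrite /is_composition all_rcons sumn_rcons hp hsI eqxx /= => /(_ isT).
rewrite prod_ps_rcons majI_rcons hsI => H.
have -> : (sumn I + k.+2 = n.+1)%N by lia.
transitivity (Sg n (rcons I k.+1) *
  (\prod_(k <- partial_sums I) qint k * qint n) * qint n.+1).
  by ring.
by rewrite H; ring.
Qed.

Lemma qint_neq0 m : (0 < m)%N -> qint m != 0.
Proof.
move=> m0; apply/eqP => h; have := congr1 (fun p : {poly rat} => p.[1]) h.
rewrite /qint horner_sum /=.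
under eq_bigr => i _ do rewrite hornerXn expr1n.
rewrite sumr_const card_ord horner0 => /eqP.
by rewrite Num.Theory.pnatr_eq0 => /eqP e; rewrite e in m0.
Qed.

Lemma prod_ps_neq0 I : all (fun k => 0 < k)%N I ->
  \prod_(k <- partial_sums I) qint k != 0.
Proof.
elim/last_ind: I => [|I x IH]; first by rewrite big_nil oner_neq0.
rewrite all_rcons => /andP [x0 hI]; rewrite prod_ps_rcons mulf_neq0 ?IH //.
by apply: qint_neq0; rewrite addn_gt0 x0 orbT.
Qed.

Theorem mainTheorem1 (n : nat) (I : seq nat) :
  (1 <= n)%N -> is_composition n I ->
  \sum_(s : 'S_n | SC_is s I) 'X^('C(n, 2) - inv_perm s) = cI n I.
Proof.
move=> _ hI; rewrite /cI -main_eq // mulpK //.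
by apply: prod_ps_neq0; case/andP: hI.
Qed.
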